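(* Let $(\alpha,\beta)\in Q$ and let $x^*=\lim_kx_k$ for the GAFS sequence. Define $G(k)=\sum_{j=k}^\infty\gamma_j$. There exists $\bar N>0$ such that for all $k\ge0$, $$\frac{G(k)}{c^Tx_k-c^Tx^*}\le\bar N.$$
   Context: Let $A\in\mathbb{R}^{m\times n}$ have rank $m$, $b\in\mathbb{R}^m$, $c\in\mathbb{R}^n$. Primal LP: $\min c^Tx$ s.t. $Ax=b$, $x\ge 0$. Standing assumptions: the primal has a strictly positive feasible point; $c^Tx$ is not constant on the primal feasible region; the LP has an optimal solution. For $u\in\mathbb{R}^n$, $\gamma(u)=\max\{u_i: u_i>0\}$. For $x>0$, $X=\mathrm{diag}(x)$. GAFS sequence: fix $\alpha\in(0,1)$, $\beta\in[0,1)$, and $x_0>0$ with $Ax_0=b$. For $k\ge0$ let $X_k=\mathrm{diag}(x_k)$, $y_k=(AX_k^2A^T)^{-1}AX_k^2c$, $s_k=c-A^Ty_k$. Set $x_1=x_0-\alpha\frac{X_0^2s_0}{\gamma(X_0s_0)}$ and, for $k\ge1$, $x_{k+1}=x_k-\alpha\frac{X_k^2s_k}{\gamma(X_ks_k)}+\beta\frac{x_k-x_{k-1}}{\|X_k^{-1}(x_k-x_{k-1})\|_\infty}$ (all quantities assumed well defined). Write $\beta_k=\beta/\|X_k^{-1}(x_k-x_{k-1})\|_\infty$ ($k\ge1$), $\gamma_0=1$, $\gamma_k=\prod_{j=1}^k\beta_j$. $Q=\{(\alpha,\beta): 0<\alpha<1,\ 0\le\beta<1/\phi,\ \alpha+\beta\le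 2/3\}$ with $\phi=(1+\sqrt5)/2$. *)

(* Defs.v *)
(* Stdlib reals. Vectors in R^k are functions nat -> R (only indices < k matter);
   an m x n matrix is a function nat -> nat -> R (entry (i,j), i < m, j < n). *)
From Stdlib Require Import Reals.
Open Scope R_scope.

Fixpoint rsum (n : nat) (f : nat -> R) : R :=
  match n with O => 0 | S p => rsum p f + f p end.

Fixpoint rmaxn (n : nat) (f : nat -> R) : R :=
  match n with O => 0 | S p => Rmax (rmaxn p f) (f p) end.

Definition dot (n : nat) (u v : nat -> R) : R := rsum n (fun i => u i * v i).

Definition matvec (n : nat) (A : nat -> nat -> R) (x : nat -> R) : nat -> R :=
  fun i => rsum n (fun j => A i j * x j).
Definition tmatvec (m : nat) (A : nat -> nat -> R) (y : nat -> R) : nat -> R :=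
  fun j => rsum m (fun i => A i j * y i).

Definition full_row_rank (m n : nat) (A : nat -> nat -> R) : Prop :=
  forall y : nat -> R,
    (forall j, (j < n)%nat -> tmatvec m A y j = 0) -> forall i, (i < m)%nat -> y i = 0.

Definition feasible (m n : nat) (A : nat -> nat -> R) (b x : nat -> R) : Prop :=
  (forall i, (i < m)%nat -> matvec n A x i = b i) /\ (forall j, (j < n)%nat -> 0 <= x j).

(* gamma(u) = max { u_i : u_i > 0 } (computed as max(0, u_0, ..., u_{n-1}),
   which coincides with it whenever some u_i > 0) *)
Definition gam (n : nat) (u : nat -> R) : R := rmaxn n u.

Definition infnorm (n : nat) (u : nat -> R) : R := rmaxn n (fun i => Rabs (u i)).

Definition sres (m : nat) (A : nat -> nat -> R) (c : nat -> R) (yk : nat -> R) : nat -> R :=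
  fun j => c j - tmatvec m A yk j.

Definition momnorm (n : nat) (x : nat -> nat -> R) (k : nat) : R :=
  infnorm n (fun i => (x k i - x (pred k) i) / x k i).

Definition betak (n : nat) (beta : R) (x : nat -> nat -> R) (k : nat) : R :=
  beta / momnorm n x k.

Fixpoint gammak (n : nat) (beta : R) (x : nat -> nat -> R) (k : nat) : R :=
  match k with
  | O => 1
  | S p => gammak n beta x p * betak n beta x (S p)
  end.

(* The GAFS sequence (x_k) with the associated dual estimates (y_k):
   y_k = (A X_k^2 A^T)^{-1} A X_k^2 c is given through the normal equations
   A X_k^2 A^T y_k = A X_k^2 c, and all quantities are assumed well defined. *)
Definition GAFS (m n : nat) (A : nat -> nat -> R) (c : nat -> R) (alpha beta : R)
    (x y : nat -> nat -> R) : Prop :=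
  (forall k i, (i < m)%nat ->
     rsum n (fun j => A i j * (x k j)^2 * tmatvec m A (y k) j)
     = rsum n (fun j => A i j * (x k j)^2 * c j)) /\
  (forall j, (j < n)%nat ->
     x 1%nat j = x 0%nat j
       - alpha * ((x 0%nat j)^2 * sres m A c (y 0%nat) j)
                 / gam n (fun i => x 0%nat i * sres m A c (y 0%nat) i)) /\
  (forall k j, (1 <= k)%nat -> (j < n)%nat ->
     x (S k) j = x k j
       - alpha * ((x k j)^2 * sres m A c (y k) j)
                 / gam n (fun i => x k i * sres m A c (y k) i)
       + beta * (x k j - x (pred k) j) / momnorm n x k) /\
  (* well-definedness: gamma(X_k s_k) exists, and the momentum normalisation is nonzero *)
  (forall k, exists i, (i < n)%nat /\ 0 < x k i * sres m A c (y k) i) /\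
  (forall k, (1 <= k)%nat -> momnorm n x k <> 0).

Definition inQ (alpha beta : R) : Prop :=
  0 < alpha < 1 /\ 0 <= beta < 2 / (1 + sqrt 5) /\ alpha + beta <= 2/3.

(* Main.v *)
Require Import Defs.
From Stdlib Require Import Reals Lra Lia.
Open Scope R_scope.

Lemma rsum_ext n f g : (forall i, (i < n)%nat -> f i = g i) -> rsum n f = rsum n g.
Proof. induction n; simpl; intros H; auto. rewrite IHn by (intros; apply H; lia). rewrite H by lia; auto. Qed.

Lemma rsum_plus n f g : rsum n (fun i => f i + g i) = rsum n f + rsum n g.
Proof. induction n; simpl; [lra|]. rewrite IHn; lra. Qed.

Lemma rsum_scal n a f : rsum n (fun i => a * f i) = a * rsum n f.
Proof. induction n; simpl; [lra|]. rewrite IHn; lra. Qed.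

Lemma rsum_zero n : rsum n (fun _ => 0) = 0.
Proof. induction n; simpl; [lra|]. rewrite IHn; lra. Qed.

Lemma rsum_swap n m (f : nat -> nat -> R) :
  rsum n (fun j => rsum m (fun i => f i j)) = rsum m (fun i => rsum n (fun j => f i j)).
Proof. induction n; simpl. now rewrite rsum_zero. rewrite IHn. now rewrite <- rsum_plus. Qed.

Lemma rsum_nonneg n f : (forall i, (i < n)%nat -> 0 <= f i) -> 0 <= rsum n f.
Proof. induction n; simpl; intros H; [lra|]. assert (0 <= f n) by (apply H; lia).
 assert (0 <= rsum n f) by (apply IHn; intros; apply H; lia). lra. Qed.

Lemma rsum_pos n f i : (forall i, (i < n)%nat -> 0 <= f i) -> (i < n)%nat -> 0 < f i -> 0 < rsum n f.
Proof. induction n; simpl; intros H Hi Hf; [lia|].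
 destruct (Nat.eq_dec i n) as [->|Hne].
 - assert (0 <= rsum n f) by (apply rsum_nonneg; intros; apply H; lia). lra.
 - assert (0 < rsum n f) by (apply IHn; [intros; apply H; lia|lia|auto]).
   assert (0 <= f n) by (apply H; lia). lra. Qed.

Lemma rmaxn_nonneg n f : 0 <= rmaxn n f.
Proof. induction n; simpl; [lra|]. eapply Rle_trans; [apply IHn|apply Rmax_l]. Qed.

Lemma rmaxn_ge n f i : (i < n)%nat -> f i <= rmaxn n f.
Proof. induction n; simpl; intros Hi; [lia|].
 destruct (Nat.eq_dec i n) as [->|Hne]. apply Rmax_r.
 eapply Rle_trans; [apply IHn; lia|apply Rmax_l]. Qed.

Lemma cv_const c : Un_cv (fun _ => c) c.
Proof. intros e He; exists 0%nat; intros; unfold Rdist; rewrite Rminus_eq_0, Rabs_R0; lra. Qed.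

Lemma cv_rsum n (u : nat -> nat -> R) (l : nat -> R) :
  (forall j, (j < n)%nat -> Un_cv (fun k => u k j) (l j)) ->
  Un_cv (fun k => rsum n (u k)) (rsum n l).
Proof. induction n; simpl; intros H. apply cv_const.
 apply CV_plus. apply IHn; intros; apply H; lia. apply H; lia. Qed.

Lemma orth m n A c (xk yk : nat -> R) :
  (forall i, (i < m)%nat ->
     rsum n (fun j => A i j * (xk j)^2 * tmatvec m A yk j)
     = rsum n (fun j => A i j * (xk j)^2 * c j)) ->
  rsum n (fun j => c j * ((xk j)^2 * sres m A c yk j))
  = rsum n (fun j => (xk j * sres m A c yk j)^2).
Proof.
  intros HN.
  assert (E : rsum n (fun j => c j * ((xk j)^2 * sres m A c yk j))
     = rsum n (fun j => (xk j * sres m A c yk j)^2)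
       + rsum n (fun j => rsum m (fun i => yk i * (A i j * (xk j)^2 * sres m A c yk j)))).
  { rewrite <- rsum_plus. apply rsum_ext; intros j _.
    assert (T : rsum m (fun i => yk i * (A i j * xk j ^ 2 * sres m A c yk j))
       = ((xk j)^2 * sres m A c yk j) * tmatvec m A yk j).
    { unfold tmatvec. rewrite <- rsum_scal. apply rsum_ext; intros; ring. }
    rewrite T. assert (Cj : c j = sres m A c yk j + tmatvec m A yk j) by (unfold sres; ring).
    set (s := sres m A c yk j) in *. set (t := tmatvec m A yk j) in *. rewrite Cj. ring. }
  rewrite E, rsum_swap.
  rewrite (rsum_ext m _ (fun _ => 0)). rewrite rsum_zero; ring.
  intros i Hi. rewrite rsum_scal.
  assert (Z : rsum n (fun j => A i j * xk j ^ 2 * sres m A c yk j) = 0).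
  { unfold sres.
    rewrite (rsum_ext n _ (fun j => A i j * xk j ^ 2 * c j + (-1) * (A i j * xk j ^ 2 * tmatvec m A yk j)))
      by (intros; ring).
    rewrite rsum_plus, rsum_scal, HN by auto. ring. }
  rewrite Z; ring.
Qed.


Theorem lemma8 (m n : nat) (A : nat -> nat -> R) (b c : nat -> R)
  (alpha beta : R) (x y : nat -> nat -> R) (xstar : nat -> R) :
  full_row_rank m n A ->
  (exists z, feasible m n A b z /\ forall j, (j < n)%nat -> 0 < z j) ->
  (exists z1 z2, feasible m n A b z1 /\ feasible m n A b z2 /\ dot n c z1 <> dot n c z2) ->
  (exists z, feasible m n A b z /\ forall w, feasible m n A b w -> dot n c z <= dot n c w) ->
  inQ alpha beta ->
  (forall j, (j < n)%nat -> 0 < x 0%nat j) ->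
  (forall i, (i < m)%nat -> matvec n A (x 0%nat) i = b i) ->
  GAFS m n A c alpha beta x y ->
  (forall j, (j < n)%nat -> Un_cv (fun k => x k j) (xstar j)) ->
  exists Nbar, 0 < Nbar /\
    forall k, 0 < dot n c (x k) - dot n c xstar /\
      exists Gk, infinite_sum (fun j => gammak n beta x (k + j)%nat) Gk /\
        Gk / (dot n c (x k) - dot n c xstar) <= Nbar.
Proof.
  intros _ _ _ _ HQ _ _ HG Hcv.
  destruct HG as (HN & H1 & Hk & Hpos & Hmn).
  destruct HQ as ([Ha0 Ha1] & [Hb0 Hb1] & _).
  set (s := fun k => sres m A c (y k)).
  set (g := fun k => gam n (fun i => x k i * s k i)).
  set (a := fun k => alpha * rsum n (fun j => (x k j * s k j)^2) / g k).
  set (D := fun k => dot n c (x k)).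
  set (Ds := dot n c xstar).
  assert (gpos : forall k, 0 < g k).
  { intros k. destruct (Hpos k) as (i & Hi & Hp). unfold g, gam.
    eapply Rlt_le_trans; [exact Hp|]. apply (rmaxn_ge n (fun i => x k i * s k i)); auto. }
  assert (apos : forall k, 0 < a k).
  { intros k. destruct (Hpos k) as (i & Hi & Hp). unfold a.
    assert (0 < rsum n (fun j => (x k j * s k j)^2)).
    { apply (rsum_pos n _ i); auto. intros; apply pow2_ge_0. apply pow_lt; exact Hp. }
    specialize (gpos k). unfold Rdiv. apply Rmult_lt_0_compat; [nra|]. apply Rinv_0_lt_compat; auto. }
  assert (step0 : D 0%nat - D 1%nat = a 0%nat).
  { unfold D, dot.
    rewrite (rsum_ext n (fun j => c j * x 1%nat j)
      (fun j => c j * x 0%nat j + (-(alpha / g 0%nat)) * (c j * (x 0%nat j ^2 * s 0%nat j)))).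
    2:{ intros j Hj. rewrite H1 by auto. unfold g, s. unfold Rdiv; ring. }
    rewrite rsum_plus, rsum_scal. unfold s. rewrite orth by apply HN. unfold a, s. unfold Rdiv; ring. }
  assert (stepk : forall k, (1 <= k)%nat ->
            D k - D (S k) = a k + betak n beta x k * (D (pred k) - D k)).
  { intros k Hk1. unfold D, dot.
    rewrite (rsum_ext n (fun j => c j * x (S k) j)
      (fun j => c j * x k j + (-(alpha / g k)) * (c j * (x k j ^2 * s k j))
         + (beta / momnorm n x k) * (c j * x k j + (-1) * (c j * x (pred k) j)))).
    2:{ intros j Hj. rewrite Hk by auto. unfold g, s. unfold Rdiv; ring. }
    rewrite !rsum_plus, !rsum_scal. unfold s. rewrite orth by apply HN.
    unfold a, s, betak. rewrite (rsum_plus n (fun i => c i * x k i)), (rsum_scal n (-1)). unfold Rdiv; ring. }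
  assert (bnn : forall k, (1 <= k)%nat -> 0 <= betak n beta x k).
  { intros k Hk1. unfold betak.
    assert (0 < momnorm n x k).
    { pose proof (rmaxn_nonneg n (fun i => Rabs ((x k i - x (pred k) i) / x k i))).
      specialize (Hmn k Hk1). unfold momnorm, infnorm in *. lra. }
    unfold Rdiv. apply Rmult_le_pos; auto. left; apply Rinv_0_lt_compat; auto. }
  assert (gnn : forall k, 0 <= gammak n beta x k).
  { induction k; simpl; [lra|]. apply Rmult_le_pos; auto. apply bnn; lia. }
  assert (dpos : forall k, 0 < D k - D (S k)).
  { induction k. rewrite step0; auto.
    rewrite stepk by lia. simpl pred.
    specialize (bnn (S k) ltac:(lia)). specialize (apos (S k)).
    assert (0 <= betak n beta x (S k) * (D k - D (S k))) by (apply Rmult_le_pos; lra). lra. }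
  assert (dlow : forall k, gammak n beta x k * a 0%nat <= D k - D (S k)).
  { induction k. simpl. rewrite step0; lra.
    rewrite stepk by lia. simpl pred. simpl gammak.
    specialize (bnn (S k) ltac:(lia)). specialize (apos (S k)).
    assert (betak n beta x (S k) * (gammak n beta x k * a 0%nat) <=
            betak n beta x (S k) * (D k - D (S k))) by (apply Rmult_le_compat_l; auto).
    nra. }
  assert (Dcv : Un_cv D Ds).
  { unfold D, Ds, dot. apply (cv_rsum n (fun k j => c j * x k j) (fun j => c j * xstar j)).
    intros j Hj. apply (CV_mult (fun _ => c j) (fun k => x k j)). apply cv_const. auto. }
  assert (Dge : forall k, Ds <= D k).
  { apply decreasing_ineq; auto. intros k. specialize (dpos k). lra. }
  assert (partial : forall k N, a 0%nat * sum_f_R0 (fun j => gammak n beta x (k + j)) N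
                                <= D k - D (k + S N)%nat).
  { intros k N. induction N; simpl.
    - rewrite Nat.add_0_r, Nat.add_1_r. specialize (dlow k). lra.
    - replace (k + S (S N))%nat with (S (k + S N)) by lia.
      specialize (dlow (k + S N)%nat). lra. }
  pose proof (apos 0%nat) as A0.
  exists (1 / a 0%nat). split. unfold Rdiv; rewrite Rmult_1_l; apply Rinv_0_lt_compat; auto.
  intros k. fold (D k). fold Ds.
  assert (gap : 0 < D k - Ds) by (specialize (dpos k); specialize (Dge (S k)); lra).
  split; auto.
  set (U := fun N => sum_f_R0 (fun j => gammak n beta x (k + j)) N).
  assert (Ub : forall N, U N <= (D k - Ds) / a 0%nat).
  { intros N. unfold U. apply (Rmult_le_reg_l (a 0%nat)); auto.
    replace (a 0%nat * ((D k - Ds) / a 0%nat)) with (D k - Ds) by (field; lra).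
    specialize (partial k N). specialize (Dge (k + S N)%nat). lra. }
  destruct (growing_cv U) as [l Hl].
  { intros N. unfold U. simpl. specialize (gnn (k + S N)%nat). lra. }
  { exists ((D k - Ds) / a 0%nat). intros z [i ->]. apply Ub. }
  exists l. split. exact Hl.
  assert (l <= (D k - Ds) / a 0%nat).
  { apply (Rle_cv_lim (Un := U) (Vn := fun _ => (D k - Ds) / a 0%nat)); auto. apply cv_const. }
  apply (Rmult_le_reg_r (D k - Ds)); auto.
  replace (l / (D k - Ds) * (D k - Ds)) with l by (field; lra).
  replace (1 / a 0%nat * (D k - Ds)) with ((D k - Ds) / a 0%nat) by (field; lra). auto.
Qed.
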